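(* Let $\Pi$ be a stably (resp. haltingly) correct CRN protocol with respect to an interface $\mathcal{I}$, and let $\mathbf{C}^0$ be an infinite family of valid initial configurations that has a stabilization (resp. halting) speed fault. Then there is a constant $\kappa>0$ such that for every integer $n_0>0$ there exist a configuration $\mathbf{c}^0\in\mathbf{C}^0$ of molecular count $\|\mathbf{c}^0\|_1=n\ge n_0$, a weakly fair execution $\eta$ emerging from $\mathbf{c}^0$, and a skipping policy $\sigma$ such that $\operatorname{RT}_{\mathrm{x}}^{\varrho,\sigma}(\eta)\ge\kappa n$ for every runtime policy $\varrho$, where $\mathrm{x}$ stands for $\mathrm{stab}$ (resp. $\mathrm{halt}$).
   Context: Model. CRN protocol $\Pi=(\mathcal{S},\mathcal{R})$: finite species set, finite reaction set $\mathcal{R}\subset\mathbb{N}^{\mathcal{S}}\times\mathbb{N}^{\mathcal{S}}$ of reactions $(\mathbf{r},\mathbf{p})$ with $\|\mathbf{r}\|_1\in\{1,2\}$, $\|\mathbf{r}\|_1\le\|\mathbf{p}\|_1$, each $\mathbf{r}$ with $1\le\|\mathbf{r}\|_1\le2$ having a nonempty set $\mathcal{R}(\mathbf{r})$ of reactions, void reactions ($\mathbf{r}=\mathbf{p}$) being alone in their $\mathcal{R}(\mathbf{r})$, $\operatorname{NV}(\mathcal{R})$ the non-void ones; finite density assumed. Configurations $\mathbf{c}\in\mathbb{N}^{\mathcal{S}}$ ($\|\mathbf{c}\|_1\ge1$); applicability $\mathbf{r}\le\mathbf{c}$, result $\mathbf{c}-\mathbf{r}+\mathbf{p}$; $\operatorname{app}(\mathbf{c})$,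 $\overline{\operatorname{app}}(\mathbf{c})$; reachability $\stackrel{*}{\rightharpoonup}$; configuration digraph $D^{\Pi}$ with $\alpha$-labeled edges $\mathbf{c}\to\alpha(\mathbf{c})$. $\mathrm{stab}(Z)$, $\mathrm{halt}(Z)$: configurations in $Z$ all of whose reachable configurations are in $Z$, resp. equal to themselves. Executions $\langle\mathbf{c}^t,\alpha^t\rangle$, weakly fair if every reaction applicable at step $t$ is scheduled or inapplicable at some later step. Interface $\mathcal{I}=(\mathcal{U},\mu,\mathcal{C})$, $Z_{\mathcal{I}}(\mathbf{c}^0)=\{\mathbf{c}:(\mu(\mathbf{c}^0),\mu(\mathbf{c}))\in\mathcal{C}\}$ with $\mu(\mathbf{c})(u)=\sum_{\mu(A)=u}\mathbf{c}(A)$; valid if nonempty; stably (haltingly) correct: every weakly fair execution from valid $\mathbf{c}^0$ reaches $\mathrm{stab}(Z_{\mathcal{I}}(\mathbf{c}^0))$ ($\mathrm{halt}$); first such step = stabilization (halting) step. Stochastic scheduler with volume $\varphi=\Theta(n)$: propensity $\pi_{\mathbf{c}}(\alpha)=\mathbf{c}(A)/|\mathcal{R}(\mathbf{r})|$ ($\mathbf{r}=A$), $\frac1\varphi\binom{\mathbf{c}(A)}2/|\mathcal{R}(\mathbf{r})|$ ($\mathbf{r}=2A$), $\frac1\varphi\mathbf{c}(A)\mathbf{c}(B)/|\mathcal{R}(\mathbf{r})|$ ($\mathbf{r}=A+B$, $A\ne B$); $\pi_{\mathbf{c}}=\pi_{\mathbf{c}}(\mathcal{R})$; reactions chosen with probability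 proportional to propensity; step time span $1/\pi_{\mathbf{c}^t}$. Runtime: $\tau(\eta,t,Q)=$ least $s>t$ with $\alpha^{s-1}\in Q$ or $Q\subseteq\bigcup_{t\le t'\le s}\overline{\operatorname{app}}(\mathbf{c}^{t'})$; runtime policy $\varrho(\mathbf{c})\subseteq\operatorname{NV}(\mathcal{R})$; skipping policy $\sigma(t)\ge t$; rounds $t(0)=0$, $t_e(i)=\sigma(t(i))$, $\mathbf{e}^i=\mathbf{c}^{t_e(i)}$, $t(i+1)=\tau(\eta,t_e(i),\varrho(\mathbf{e}^i))$; $\operatorname{TC}^{\varrho}(\mathbf{c})$ = expected total time span of steps $0,\dots,\tau(\eta_r,0,\varrho(\mathbf{c}))-1$ of a stochastic execution $\eta_r$ from $\mathbf{c}$; $\operatorname{RT}_{\mathrm{stab}}^{\varrho,\sigma}(\eta)$ (resp. $\mathrm{halt}$) $=\sum_{i<i^*}\operatorname{TC}^{\varrho}(\mathbf{e}^i)$ with $i^*=\min\{i:t(i)\ge t^*\}$, $t^*$ the stabilization (halting) step. Speed faults: for $s>0$, a configuration $\mathbf{c}$ is a stabilization (resp. halting) $s$-pitfall of a valid initial configuration $\mathbf{c}^0$ if $\mathbf{c}^0\stackrel{*}{\rightharpoonup}\mathbf{c}$ and every path in $D^{\Pi}$ from $\mathbf{c}$ to $\mathrm{stab}(Z_{\mathcal{I}}(\mathbf{c}^0))$ (resp. $\mathrm{halt}(Z_{\mathcal{I}}(\mathbf{c}^0))$) includes an edge labeled by a reaction whose propensity (at the edge's source configuration) is at most $s/\varphi$.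 An infinite family $\mathbf{C}^0$ of valid initial configurations has a stabilization (resp. halting) speed fault if for some constant $s>0$ and every integer $n_0>0$ there is $\mathbf{c}^0\in\mathbf{C}^0$ with $\|\mathbf{c}^0\|_1\ge n_0$ that admits a stabilization (resp. halting) $s$-pitfall. *)

(* Defs.v *)
From HB Require Import structures.
From mathcomp Require Import all_boot all_order all_algebra.
From mathcomp Require Import all_classical all_reals ereal.
Set Implicit Arguments. Unset Strict Implicit. Unset Printing Implicit Defensive.
Import Order.TTheory GRing.Theory Num.Theory.
Local Open Scope ring_scope.

Lemma pmin_ex (P : nat -> Prop) : (exists n, P n) -> exists n, `[< P n >].
Proof. by case=> n Pn; exists n; apply/asboolP. Qed.

Definition pmin (P : nat -> Prop) (d : nat) : nat :=
  match pselect (exists n, P n) with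
  | left h => ex_minn (pmin_ex h)
  | right _ => d
  end.

Section CRN.
Variable S : finType.

(* vectors in N^S ; configurations are such vectors with norm >= 1 *)
Definition cfg := {ffun S -> nat}.
Definition norm1 (c : cfg) : nat := (\sum_(A : S) c A)%N.
Definition reaction := (cfg * cfg)%type.   (* (reactant vector r, product vector p) *)

Variable Rs : seq reaction.

Definition void (a : reaction) : bool := a.1 == a.2.
Definition NV : seq reaction := [seq a <- Rs | ~~ void a].
Definition Rof (r : cfg) : seq reaction := [seq a <- Rs | a.1 == r].

Definition wf_crn : Prop :=
  [/\ uniq Rs,
      (forall a, a \in Rs -> (norm1 a.1 == 1)%N || (norm1 a.1 == 2)%N),
      (forall a, a \in Rs -> (norm1 a.1 <= norm1 a.2)%N),
      (forall r : cfg, (1 <= norm1 r <= 2)%N -> Rof r != [::]) &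
      (forall a, a \in Rs -> void a -> Rof a.1 = [:: a])].

Definition applicable (a : reaction) (c : cfg) : bool :=
  [forall A, a.1 A <= c A]%N.
Definition apply (a : reaction) (c : cfg) : cfg :=
  [ffun A => (c A - a.1 A + a.2 A)%N].

Definition step (c c' : cfg) : Prop :=
  exists2 a, a \in Rs & applicable a c /\ c' = apply a c.

Inductive reach : cfg -> cfg -> Prop :=
| reach_refl c : reach c c
| reach_step c c' c'' : step c c' -> reach c' c'' -> reach c c''.

Definition stab (Z : cfg -> Prop) (c : cfg) : Prop :=
  Z c /\ forall c', reach c c' -> Z c'.
Definition halt (Z : cfg -> Prop) (c : cfg) : Prop :=
  Z c /\ forall c', reach c c' -> c' = c.

Inductive mode := Stab | Halt.
Definition goal (x : mode) (Z : cfg -> Prop) : cfg -> Prop :=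
  match x with Stab => stab Z | Halt => halt Z end.

Record execution := Exec { ec : nat -> cfg ; ea : nat -> reaction }.

Definition is_execution (eta : execution) (c0 : cfg) : Prop :=
  ec eta 0 = c0 /\
  forall t, [/\ ea eta t \in Rs, applicable (ea eta t) (ec eta t) &
                ec eta t.+1 = apply (ea eta t) (ec eta t)].

Definition weakly_fair (eta : execution) : Prop :=
  forall t a, a \in Rs -> applicable a (ec eta t) ->
    exists t', (t <= t')%N /\
      (ea eta t' = a \/ ~~ applicable a (ec eta t')).

Variables (U : finType) (mu : S -> U)
          (Crel : {ffun U -> nat} -> {ffun U -> nat} -> Prop).

Definition muc (c : cfg) : {ffun U -> nat} :=
  [ffun u => (\sum_(A : S | mu A == u) c A)%N].

Definition ZI (c0 : cfg) : cfg -> Prop :=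
  fun c => (1 <= norm1 c)%N /\ Crel (muc c0) (muc c).

Definition valid (c0 : cfg) : Prop :=
  (1 <= norm1 c0)%N /\ exists c, ZI c0 c.

Definition correct (x : mode) : Prop :=
  forall c0 eta, valid c0 -> is_execution eta c0 -> weakly_fair eta ->
    exists t, goal x (ZI c0) (ec eta t).

Definition finite_density : Prop :=
  exists D : nat, forall c0 c, valid c0 -> reach c0 c ->
    (norm1 c <= D * norm1 c0)%N.

Definition tstar (x : mode) (c0 : cfg) (eta : execution) : nat :=
  pmin (fun t => goal x (ZI c0) (ec eta t)) 0.

Definition tau_pred (eta : execution) (t : nat) (Q : seq reaction) (s : nat) : bool :=
  (t < s)%N &&
  ((ea eta s.-1 \in Q) ||
   all (fun q => has (fun t' => ~~ applicable q (ec eta t')) (index_iota t s.+1)) Q).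

Definition tau (eta : execution) (t : nat) (Q : seq reaction) : nat :=
  pmin (fun s => tau_pred eta t Q s) t.

Definition runtime_policy (rho : cfg -> seq reaction) : Prop :=
  forall c a, a \in rho c -> a \in NV.

Definition skipping_policy (sigma : nat -> nat) : Prop :=
  forall t, (t <= sigma t)%N.

Fixpoint tround (rho : cfg -> seq reaction) (sigma : nat -> nat)
  (eta : execution) (i : nat) : nat :=
  match i with
  | 0 => 0
  | i'.+1 => let te := sigma (tround rho sigma eta i') in
             tau eta te (rho (ec eta te))
  end.

Definition eround rho sigma eta i : cfg := ec eta (sigma (tround rho sigma eta i)).

Definition istar x c0 rho sigma eta : nat :=
  pmin (fun i => tstar x c0 eta <= tround rho sigma eta i)%N 0.

Variable RR : realType.

(* propensity with volume phi: for r = A: c(A)/|R(r)|;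
   for r = 2A: (1/phi) binom(c(A),2)/|R(r)|; for r = A+B: (1/phi) c(A)c(B)/|R(r)|. *)
Definition propensity (phi : RR) (c : cfg) (a : reaction) : RR :=
  phi ^- (norm1 a.1).-1 * (\prod_(A : S) 'C(c A, a.1 A))%:R / (size (Rof a.1))%:R.

Definition ptotal (phi : RR) (c : cfg) : RR := \sum_(a <- Rs) propensity phi c a.

(* W N c Rem = expected total time span of the steps t < min(tau, N) of a
   stochastic execution from c, where Q is the target set of tau and Rem is
   the set of reactions of Q not yet observed inapplicable. *)
Fixpoint Wtrunc (phi : RR) (Q : seq reaction) (N : nat) (c : cfg)
  (Rem : seq reaction) : RR :=
  match N with
  | 0 => 0
  | N'.+1 =>
      (ptotal phi c)^-1 +
      \sum_(a <- Rs)
        (propensity phi c a / ptotal phi c) *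
        (let c' := apply a c in
         let Rem' := [seq q <- Rem | applicable q c'] in
         if (a \in Q) || (Rem' == [::]) then 0
         else Wtrunc phi Q N' c' Rem')
  end.

(* TC^rho(c): expected total time span of steps 0 .. tau(eta_r,0,rho(c))-1
   (as the supremum of the truncated expectations, monotone convergence) *)
Definition TC (phi : RR) (rho : cfg -> seq reaction) (c : cfg) : \bar RR :=
  ereal_sup (range (fun N => (Wtrunc phi (rho c) N c
                                [seq q <- rho c | applicable q c])%:E)).

Definition RT (x : mode) (phi : RR) (rho : cfg -> seq reaction)
  (sigma : nat -> nat) (c0 : cfg) (eta : execution) : \bar RR :=
  (\sum_(i < istar x c0 rho sigma eta) TC phi rho (eround rho sigma eta i))%E.

Fixpoint valid_path (c : cfg) (ps : seq reaction) : Prop :=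
  match ps with
  | [::] => True
  | a :: ps' => [/\ a \in Rs, applicable a c & valid_path (apply a c) ps']
  end.

Fixpoint path_end (c : cfg) (ps : seq reaction) : cfg :=
  match ps with [::] => c | a :: ps' => path_end (apply a c) ps' end.

Fixpoint has_slow_edge (phi s : RR) (c : cfg) (ps : seq reaction) : Prop :=
  match ps with
  | [::] => False
  | a :: ps' => propensity phi c a <= s / phi \/ has_slow_edge phi s (apply a c) ps'
  end.

Definition pitfall (x : mode) (phi s : RR) (c0 c : cfg) : Prop :=
  reach c0 c /\
  forall ps, valid_path c ps -> goal x (ZI c0) (path_end c ps) ->
    has_slow_edge phi s c ps.

(* vol n = the volume phi used when the initial molecular count is n *)
Definition speed_fault (x : mode) (vol : nat -> RR) (C0 : set cfg) : Prop :=
  exists2 s : RR, 0 < s &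
    forall n0 : nat, (0 < n0)%N ->
      exists c0, [/\ C0 c0, (n0 <= norm1 c0)%N &
                     exists c, pitfall x (vol (norm1 c0)) s c0 c].

Definition volume_linear (vol : nat -> RR) : Prop :=
  exists a b : RR, [/\ 0 < a, 0 < b &
    forall n : nat, (1 <= n)%N -> a * n%:R <= vol n /\ vol n <= b * n%:R].
End CRN.

(* Main.v *)
Require Import Defs.
From HB Require Import structures.
From mathcomp Require Import all_boot all_order all_algebra.
From mathcomp Require Import all_classical all_reals ereal.
From mathcomp Require Import zify ring lra.
Set Implicit Arguments. Unset Strict Implicit. Unset Printing Implicit Defensive.
Import Order.TTheory GRing.Theory Num.Theory.
Local Open Scope ring_scope.


Lemma pminP (P : nat -> Prop) d : (exists n, P n) ->
  P (pmin P d) /\ forall m, P m -> (pmin P d <= m)%N.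
Proof.
move=> ex; rewrite /pmin; case: pselect => [h|//].
case: ex_minnP => m /asboolP Pm min; split => // k Pk; apply: min; exact/asboolP.
Qed.

Section Gen.
Variables (S : finType) (Rs : seq (reaction S)).
Implicit Types (c : cfg S) (ps : seq (reaction S)) (a : reaction S).
Hypothesis Hnorm : forall a, a \in Rs -> (norm1 a.1 <= norm1 a.2)%N.

Lemma reach_trans c1 c2 c3 : reach Rs c1 c2 -> reach Rs c2 c3 -> reach Rs c1 c3.
Proof. elim=> [//|c c' c'' st _ IH] h; exact: reach_step st (IH h). Qed.

Lemma reach_path c ps : valid_path Rs c ps -> reach Rs c (path_end c ps).
Proof.
elim: ps c => [|a ps IH] c /=; first by constructor.
case=> aR app v; apply: reach_step (IH _ v); by exists a.
Qed.

Lemma path_of_reach c c' : reach Rs c c' ->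
  exists ps, valid_path Rs c ps /\ path_end c ps = c'.
Proof.
elim=> [c0|c1 c2 c3 [a aR [app ->]] _ [ps [v e]]]; first by exists [::].
by exists (a :: ps).
Qed.

Lemma valid_path_cat c ps1 ps2 : valid_path Rs c (ps1 ++ ps2) <->
  valid_path Rs c ps1 /\ valid_path Rs (path_end c ps1) ps2.
Proof.
elim: ps1 c => [|a ps IH] c /=; first by split=> [h|[]].
split=> [[aR app /IH [v1 v2]]|[[aR app v1] v2]]; first by [].
by split=> //; apply/IH.
Qed.

Lemma path_end_cat c ps1 ps2 :
  path_end c (ps1 ++ ps2) = path_end (path_end c ps1) ps2.
Proof. by elim: ps1 c => //=. Qed.

Definition cfg_at c (ps : seq (reaction S)) j := path_end c (take j ps).

Lemma cfg_at0 c ps : cfg_at c ps 0 = c.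
Proof. by rewrite /cfg_at take0. Qed.

Lemma cfg_at_size c ps j : (size ps <= j)%N -> cfg_at c ps j = path_end c ps.
Proof. by move=> h; rewrite /cfg_at take_oversize. Qed.

Lemma cfg_at_step d c ps j : valid_path Rs c ps -> (j < size ps)%N ->
  [/\ nth d ps j \in Rs, applicable (nth d ps j) (cfg_at c ps j) &
      cfg_at c ps j.+1 = apply (nth d ps j) (cfg_at c ps j)].
Proof.
move=> v lt; have e : cfg_at c ps j.+1 = apply (nth d ps j) (cfg_at c ps j).
  by rewrite /cfg_at (take_nth d lt) -cats1 path_end_cat.
move: v; rewrite -{1}(cat_take_drop j ps) => /valid_path_cat [_].
by rewrite (drop_nth d lt) /= => -[aR app _]; split.
Qed.

Lemma cfg_at_catl c ps1 ps2 j : (j <= size ps1)%N ->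
  cfg_at c (ps1 ++ ps2) j = cfg_at c ps1 j.
Proof.
move=> h; rewrite /cfg_at take_cat; case: ltnP => // h2.
have -> : j = size ps1 by apply/eqP; rewrite eqn_leq h h2.
by rewrite subnn take0 cats0 take_size.
Qed.

Lemma cfg_at_catr c ps1 ps2 j : (size ps1 <= j)%N ->
  cfg_at c (ps1 ++ ps2) j = cfg_at (path_end c ps1) ps2 (j - size ps1).
Proof.
move=> h; rewrite /cfg_at take_cat ltnNge h /= path_end_cat //.
Qed.

Lemma norm1_apply a c : applicable a c ->
  (norm1 (apply a c) + norm1 a.1 = norm1 c + norm1 a.2)%N.
Proof.
move=> /forallP app; rewrite /norm1 -!big_split /=; apply: eq_bigr => A _.
rewrite ffunE; have := app A; lia.
Qed.

Lemma norm1_mono a c : a \in Rs -> applicable a c ->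
  (norm1 c <= norm1 (apply a c))%N.
Proof. move=> aR app; have := norm1_apply app; have := Hnorm aR; lia. Qed.

Lemma reach_norm c c' : reach Rs c c' -> (norm1 c <= norm1 c')%N.
Proof.
elim=> // c1 c2 c3 [a aR [app ->]] _ h; exact: leq_trans (norm1_mono aR app) h.
Qed.

Lemma goal_reach x Z c c' : goal Rs x Z c -> reach Rs c c' -> goal Rs x Z c'.
Proof.
case: x => /= [[Zc H] r|[Zc H] r]; first split; first exact: H.
  by move=> c'' r'; apply: H; exact: reach_trans r r'.
by have := H _ r => ->; split.
Qed.

Lemma exec_reach eta c0 t k : is_execution Rs eta c0 ->
  reach Rs (ec eta t) (ec eta (t + k)).
Proof.
move=> [_ H]; elim: k => [|k IH]; first by rewrite addn0; constructor.
apply: reach_trans IH _; rewrite addnS; case: (H (t + k)) => aR app ->.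
apply: reach_step (reach_refl _ _); by exists (ea eta (t + k)).
Qed.

Lemma exec_reach_le eta c0 t t' : is_execution Rs eta c0 -> (t <= t')%N ->
  reach Rs (ec eta t) (ec eta t').
Proof. by move=> E /subnKC <-; apply: exec_reach E. Qed.

Lemma tau_exists eta t Q : weakly_fair Rs eta -> {subset Q <= Rs} ->
  exists s, tau_pred eta t Q s.
Proof.
move=> wf sQ.
suff [[s [lts inQ]]|[S' [leS H]]] : (exists s, (t < s)%N /\ ea eta s.-1 \in Q) \/
   (exists S', (t <= S')%N /\ forall q, q \in Q -> exists t',
       (t <= t' <= S')%N /\ ~~ applicable q (ec eta t')).
- by exists s; rewrite /tau_pred lts inQ.
- exists S'.+1; rewrite /tau_pred ltnS leS /=; apply/orP; right.
  apply/allP => q /H [t' [h1 h2]]; apply/hasP; exists t' => //.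
  rewrite mem_index_iota; lia.
elim: Q sQ => [|q Q IH] sQ.
  by right; exists t; split => // q.
have sQ' : {subset Q <= Rs} by move=> y yQ; apply: sQ; rewrite inE yQ orbT.
case: (IH sQ') => [[s [h1 h2]]|[S' [leS H]]].
  by left; exists s; rewrite inE h2 orbT.
have qR : q \in Rs by apply: sQ; rewrite inE eqxx.
have [t' [le1 h]] : exists t', (t <= t')%N /\
    (ea eta t' = q \/ ~~ applicable q (ec eta t')).
  case: (boolP (applicable q (ec eta t))) => app.
    exact: wf app.
  by exists t; split => //; right.
case: h => h.
  by left; exists t'.+1; split; [lia | rewrite /= h inE eqxx].
right; exists (maxn S' t'); split; first lia.
move=> y; rewrite inE => /orP [/eqP ->|yQ].
  by exists t'; split => //; lia.
case: (H _ yQ) => t2 [h3 h4]; exists t2; split => //; lia.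
Qed.

Lemma tauP eta t Q : weakly_fair Rs eta -> {subset Q <= Rs} ->
  [/\ (t < tau eta t Q)%N, tau_pred eta t Q (tau eta t Q) &
      forall s, tau_pred eta t Q s -> (tau eta t Q <= s)%N].
Proof.
move=> wf sQ; have ex := tau_exists t wf sQ.
have [h1 h2] := pminP t ex; split => //.
by move: h1; rewrite /tau_pred => /andP [].
Qed.

End Gen.


Section Exec.
Variables (S : finType) (Rs : seq (reaction S)).
Implicit Types (c : cfg S) (ps : seq (reaction S)) (a : reaction S).
Hypothesis Hnorm : forall a, a \in Rs -> (norm1 a.1 <= norm1 a.2)%N.
Hypothesis Happ : forall c, (1 <= norm1 c)%N -> has (fun a => applicable a c) Rs.

Definition d0 : reaction S := ([ffun _ => 0%N], [ffun _ => 0%N]).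
Definition pick c := nth d0 Rs (find (fun a => applicable a c) Rs).
Definition rr_at t c := let a := nth d0 Rs (t %% size Rs) in
  if applicable a c then a else pick c.
Fixpoint rrc c t := if t is t'.+1 then apply (rr_at t' (rrc c t')) (rrc c t') else c.

Lemma pick_spec c : (1 <= norm1 c)%N -> pick c \in Rs /\ applicable (pick c) c.
Proof.
move=> h; have := Happ h; rewrite /pick => hh; split.
  by rewrite mem_nth // -has_find.
exact: (nth_find d0 hh).
Qed.

Lemma size_Rs_gt0 c : (1 <= norm1 c)%N -> (0 < size Rs)%N.
Proof. by move/Happ; case: Rs. Qed.

Lemma rr_atP t c : (1 <= norm1 c)%N -> rr_at t c \in Rs /\ applicable (rr_at t c) c.
Proof.
move=> h; rewrite /rr_at; case: ifP => [app|_]; last exact: pick_spec.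
split => //; rewrite mem_nth // ltn_mod; exact: size_Rs_gt0 h.
Qed.

Lemma rrc_norm c t : (1 <= norm1 c)%N -> (1 <= norm1 (rrc c t))%N.
Proof.
move=> h; elim: t => //= t IH; have [aR app] := rr_atP t IH.
exact: leq_trans IH (norm1_mono Hnorm aR app).
Qed.

Definition mkE c0 Lst : execution S :=
  Exec (fun t => if (t < size Lst)%N then cfg_at c0 Lst t
                 else rrc (path_end c0 Lst) (t - size Lst))
       (fun t => if (t < size Lst)%N then nth d0 Lst t
                 else rr_at (t - size Lst) (rrc (path_end c0 Lst) (t - size Lst))).

Lemma mkE_ec c0 Lst t : (t <= size Lst)%N -> ec (mkE c0 Lst) t = cfg_at c0 Lst t.
Proof.
rewrite /= leq_eqVlt => /orP [/eqP ->|->] //.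
by rewrite ltnn subnn /= cfg_at_size.
Qed.

Lemma mkE_ea c0 Lst t : (t < size Lst)%N -> ea (mkE c0 Lst) t = nth d0 Lst t.
Proof. by move=> /= ->. Qed.

Lemma mkE_ec_ge c0 Lst t : (size Lst <= t)%N ->
  ec (mkE c0 Lst) t = rrc (path_end c0 Lst) (t - size Lst).
Proof.
rewrite leq_eqVlt => /orP [/eqP <-|h].
(by rewrite mkE_ec // subnn cfg_at_size).
rewrite [ec _ _]/=. rewrite ltnNge (ltnW h). done.
Qed.

Lemma mkE_ea_ge c0 Lst t : (size Lst <= t)%N ->
  ea (mkE c0 Lst) t = rr_at (t - size Lst) (rrc (path_end c0 Lst) (t - size Lst)).
Proof. move=> h. rewrite [ea _ _]/=. rewrite ltnNge h. done. Qed.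

Lemma mkE_exec c0 Lst : (1 <= norm1 c0)%N -> valid_path Rs c0 Lst ->
  is_execution Rs (mkE c0 Lst) c0.
Proof.
move=> n0 v; split; first by rewrite mkE_ec // cfg_at0.
have n1 : (1 <= norm1 (path_end c0 Lst))%N.
  exact: leq_trans n0 (reach_norm Hnorm (reach_path v)).
move=> t; case: (ltnP t (size Lst)) => lt.
  rewrite (mkE_ea c0 lt) (mkE_ec c0 (ltnW lt)) (mkE_ec c0 lt).
  exact: cfg_at_step.
rewrite (mkE_ea_ge c0 lt) (mkE_ec_ge c0 lt) (mkE_ec_ge c0 (leqW lt)) subSn //.
have [aR app] := rr_atP (t - size Lst) (rrc_norm (t - size Lst) n1).
by split.
Qed.

Lemma mkE_fair c0 Lst : (1 <= norm1 c0)%N -> valid_path Rs c0 Lst ->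
  weakly_fair Rs (mkE c0 Lst).
Proof.
move=> n0 v t a aR _.
have m0 : (0 < size Rs)%N by case: (Rs) aR.
exists (size Lst + (t.+1 * size Rs + index a Rs)); split.
  have : (t.+1 <= t.+1 * size Rs)%N by rewrite leq_pmulr.
  lia.
rewrite (mkE_ea_ge c0 (leq_addr _ _)) (mkE_ec_ge c0 (leq_addr _ _)) addKn.
rewrite /rr_at modnMDl modn_small ?index_mem // nth_index //.
by case: ifP => _; [left | right].
Qed.

End Exec.


Section Fast.
Variables (S : finType) (Rs : seq (reaction S)) (RR : realType) (phi s : RR) (K : nat).
Implicit Types (c : cfg S) (ps : seq (reaction S)) (a : reaction S).

Notation Tc := {ffun S -> 'I_K.+1}.
Definition emb (g : Tc) : cfg S := [ffun A => nat_of_ord (g A)].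
Definition proj c : Tc := [ffun A => inord (c A)].

Lemma emb_proj c : (norm1 c <= K)%N -> emb (proj c) = c.
Proof.
move=> h; apply/ffunP => A; rewrite !ffunE inordK // ltnS; apply: leq_trans h.
by rewrite /norm1 (bigD1 A) //= leq_addr.
Qed.

Definition fast c a := applicable a c && (s / phi < propensity Rs phi c a).
Definition fe : rel Tc := fun g h =>
  has (fun a => fast (emb g) a && (apply a (emb g) == emb h)) Rs.

Lemma fe_step g h : fe g h ->
  exists a, [/\ a \in Rs, fast (emb g) a & apply a (emb g) = emb h].
Proof. by move/hasP => [a aR /andP [f /eqP e]]; exists a. Qed.

Lemma fast_path x y : connect fe x y -> exists ps,
  [/\ valid_path Rs (emb x) ps, path_end (emb x) ps = emb y,
      ~ has_slow_edge Rs phi s (emb x) ps &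
      forall j, (j < size ps)%N -> exists z, connect fe x z /\ cfg_at (emb x) ps j = emb z].
Proof.
move/connectP => [p pth ->]; elim: p x pth => [|h p IH] x /= pth.
  by exists [::]; split.
move/andP: pth => [fxh pth]; have [a [aR fa e]] := fe_step fxh.
have [ps [v pe ns cf]] := IH h pth.
have /andP [app lt] := fa.
exists (a :: ps); split.
- by rewrite /= e.
- by rewrite /= e.
- by rewrite /= e => -[le|//]; move: lt; rewrite ltNge le.
- case => [_|j] /=.
    by exists x; split; [exact: connect0 | exact: cfg_at0].
  rewrite ltnS => /cf [z [cz ez]]; exists z; split.
    exact: connect_trans (connect1 fxh) cz.
  by rewrite /cfg_at /= e.
Qed.

Lemma bottom_scc (x0 : Tc) : exists f, connect fe x0 f /\
  forall g, connect fe f g -> connect fe g f.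
Proof.
case: (@arg_minnP _ x0 (connect fe x0) (fun g => #|connect fe g|) (connect0 _ _)).
move=> f c0f minf; exists f; split => // g cfg.
have sub : connect fe g \subset connect fe f.
  by apply/fintype.subsetP => y; apply: connect_trans.
have := minf g (connect_trans c0f cfg) => le.
have eqc : #|connect fe g| = #|connect fe f|.
  by apply/eqP; rewrite eqn_leq le subset_leq_card.
move/subset_cardP: sub => /(_ eqc) /(_ f) e.
have : f \in connect fe f by rewrite inE connect0.
by rewrite -e inE.
Qed.

Variable f : Tc.
Hypothesis Hscc : forall g, connect fe f g -> connect fe g f.
Hypothesis Hclose : forall g a, connect fe f g -> a \in Rs -> fast (emb g) a ->
  exists h, apply a (emb g) = emb h.

Definition inB c := exists g, connect fe f g /\ c = emb g.
Definition allB c ps := forall j, (j < size ps)%N -> inB (cfg_at c ps j).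

Lemma allB_cat c ps1 ps2 : allB c ps1 -> allB (path_end c ps1) ps2 ->
  allB c (ps1 ++ ps2).
Proof.
move=> h1 h2 j; rewrite size_cat => lt; case: (ltnP j (size ps1)) => l.
  by rewrite cfg_at_catl; [apply: h1 | exact: ltnW].
rewrite cfg_at_catr //; apply: h2; lia.
Qed.

Lemma walk_exists d (pairs : seq (Tc * reaction S)) :
  (forall x, x \in pairs -> [/\ connect fe f x.1, x.2 \in Rs & fast (emb x.1) x.2]) ->
  exists W, [/\ valid_path Rs (emb f) W, path_end (emb f) W = emb f, allB (emb f) W &
    forall x, x \in pairs -> exists j,
      [/\ (j < size W)%N, cfg_at (emb f) W j = emb x.1 & nth d W j = x.2]].
Proof.
elim: pairs => [|x pairs IH] H.
  by exists [::]; split.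
have [W' [v' pe' aB' cov']] : exists W, [/\ valid_path Rs (emb f) W,
    path_end (emb f) W = emb f, allB (emb f) W &
    forall x, x \in pairs -> exists j,
      [/\ (j < size W)%N, cfg_at (emb f) W j = emb x.1 & nth d W j = x.2]].
  by apply: IH => y yp; apply: H; rewrite inE yp orbT.
have [cx aR fa] := H x (mem_head _ _).
have [h eh] := Hclose cx aR fa.
have feh : fe x.1 h by apply/hasP; exists x.2 => //; rewrite fa eh eqxx.
have cfh : connect fe f h := connect_trans cx (connect1 feh).
have [ps1 [v1 pe1 _ cf1]] := fast_path cx.
have [ps2 [v2 pe2 _ cf2]] := fast_path (Hscc cfh).
have /andP [app _] := fa.
have vseg : valid_path Rs (emb f) (ps1 ++ x.2 :: ps2).
  by apply/valid_path_cat; split => //; rewrite pe1 /= eh.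
have peseg : path_end (emb f) (ps1 ++ x.2 :: ps2) = emb f.
  by rewrite path_end_cat pe1 /= eh.
exists ((ps1 ++ x.2 :: ps2) ++ W'); split.
- by apply/valid_path_cat; rewrite peseg.
- by rewrite path_end_cat peseg.
- apply: allB_cat; last by rewrite peseg.
  apply: allB_cat; first by move=> j /cf1 [z [cz ->]]; exists z.
  rewrite pe1 -cat1s; apply: allB_cat.
    by case => // _; rewrite cfg_at0; exists x.1.
  rewrite /= eh => j /cf2 [z [cz ->]]; exists z; split => //.
  exact: connect_trans cfh cz.
- move=> y; rewrite inE => /orP [/eqP ->|yp].
    exists (size ps1); rewrite -catA; split.
    + rewrite !size_cat /=; lia.
    + by rewrite cfg_at_catr // subnn pe1 cfg_at0.
    + by rewrite nth_cat ltnn subnn.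
  have [j [lj cj nj]] := cov' y yp.
  exists (size (ps1 ++ x.2 :: ps2) + j); split.
  + rewrite !size_cat /=; move: lj; lia.
  + by rewrite cfg_at_catr ?leq_addr // addKn peseg.
  + by rewrite nth_cat ltnNge leq_addr /= addKn.
Qed.

Lemma walk_cover d : exists W, [/\ valid_path Rs (emb f) W, path_end (emb f) W = emb f,
  allB (emb f) W &
  forall g a, connect fe f g -> a \in Rs -> fast (emb g) a -> exists j,
      [/\ (j < size W)%N, cfg_at (emb f) W j = emb g & nth d W j = a]].
Proof.
pose pairs := [seq ga <- [seq (g, a) | g <- enum Tc, a <- Rs] |
   connect fe f ga.1 && (ga.2 \in Rs) && fast (emb ga.1) ga.2].
have Hp : forall x, x \in pairs -> [/\ connect fe f x.1, x.2 \in Rs & fast (emb x.1) x.2].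
  by move=> x; rewrite mem_filter => /andP [/andP [/andP [-> ->] ->] _].
have [W [v pe aB cov]] := walk_exists d Hp.
exists W; split => // g a cg aR fa; apply: (cov (g, a)).
rewrite mem_filter /= cg aR fa /=.
by apply: (allpairs_f (fun g a => (g, a))) => //; rewrite mem_enum.
Qed.

End Fast.


Section Props.
Variables (S : finType) (Rs : seq (reaction S)) (RR : realType) (phi : RR).
Implicit Types (c : cfg S) (ps : seq (reaction S)) (a : reaction S).
Hypothesis Hphi : 0 < phi.

Lemma prop_ge0 c a : 0 <= propensity Rs phi c a.
Proof.
rewrite /propensity; apply: divr_ge0 => //; apply: mulr_ge0 => //.
by rewrite invr_ge0 exprn_ge0 // ltW.
Qed.

Lemma ptotal_ge0 c : 0 <= ptotal Rs phi c.
Proof. by apply: sumr_ge0 => a _; apply: prop_ge0. Qed.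

Lemma prop_app c a : 0 < propensity Rs phi c a -> applicable a c.
Proof.
move=> h; apply/forallP => A; rewrite leqNgt; apply/negP => lt; move: h.
by rewrite /propensity (bigD1 A) //= bin_small // mul0n mulr0 mul0r ltxx.
Qed.

Lemma W_ge0 Q N c Rem : 0 <= Wtrunc Rs phi Q N c Rem.
Proof.
elim: N c Rem => [|N IH] c Rem //=.
apply: addr_ge0; first by rewrite invr_ge0 ptotal_ge0.
apply: sumr_ge0 => a _; apply: mulr_ge0.
  by apply: divr_ge0; [apply: prop_ge0 | apply: ptotal_ge0].
by case: ifP => _ //; apply: IH.
Qed.

Lemma prop_le_ptotal c a : a \in Rs -> propensity Rs phi c a <= ptotal Rs phi c.
Proof.
move=> aR; rewrite /ptotal (big_rem a aR) /= lerDl.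
by apply: sumr_ge0 => b _; apply: prop_ge0.
Qed.

Hypothesis Hwf : forall r : cfg S, (1 <= norm1 r <= 2)%N -> Rof Rs r != [::].

Lemma unimol c : (1 <= norm1 c)%N -> exists a, [/\ a \in Rs, applicable a c &
  1 / (size Rs)%:R <= propensity Rs phi c a].
Proof.
move=> n1.
have [A cA] : exists A : S, (0 < c A)%N.
  case: (pickP (fun A : S => 0 < c A)%N) => [A h|none]; first by exists A.
  move: n1; rewrite /norm1 big1 // => B _; move: (none B) => /=; lia.
pose r : cfg S := [ffun B => nat_of_bool (B == A)].
have nr : norm1 r = 1%N.
  rewrite /norm1 (bigD1 A) //= big1 => [|B nBA]; first by rewrite ffunE eqxx.
  by rewrite ffunE (negbTE nBA).
have := Hwf (r := r); rewrite nr /= => /(_ isT).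
case E: (Rof Rs r) => [//|a l] _.
have : a \in Rof Rs r by rewrite E mem_head.
rewrite mem_filter => /andP [/eqP ar aR].
have app : applicable a c.
  apply/forallP => B; rewrite ar ffunE; case: eqP => [->|] //.
exists a; split => //.
have szR : (size (Rof Rs a.1) <= size Rs)%N by rewrite size_filter count_size.
have sz0 : (0 < size (Rof Rs a.1))%N by rewrite ar E.
have P1 : (0 < \prod_(B : S) 'C(c B, a.1 B))%N.
  apply: prodn_gt0 => B; rewrite bin_gt0; exact: (forallP app B).
rewrite /propensity ar nr /= expr0 invr1 mul1r.
have szr : (size (Rof Rs r) <= size Rs)%N by rewrite -ar.
have sz0r : (0 < size (Rof Rs r))%N by rewrite -ar.
apply: (@le_trans _ _ (1 / (size (Rof Rs r))%:R)).
  have Rs0 : (0 < size Rs)%N by case: (Rs) aR.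
  by rewrite !mul1r lef_pV2 ?posrE ?ltr0n // ler_nat.
apply: ler_wpM2r; first by rewrite invr_ge0.
by rewrite mul1r ler1n -ar.
Qed.

Lemma TC_ge0 rho c : (0 <= TC Rs phi rho c)%E.
Proof.
apply: le_trans (ereal_sup_ubound _); last by exists 0%N.
by rewrite lee_fin.
Qed.

Lemma TC_ge_inv rho c : ((ptotal Rs phi c)^-1%:E <= TC Rs phi rho c)%E.
Proof.
apply: le_trans (ereal_sup_ubound _); last by exists 1%N.
rewrite lee_fin /= big1 ?addr0 // => a _.
by case: ifP => _; rewrite mulr0.
Qed.

End Props.

Lemma sum_const_seq (R : nmodType) (I : Type) (l : seq I) (k : R) :
  \sum_(a <- l) k = k *+ size l.
Proof.
elim: l => [|x l IH]; first by rewrite big_nil.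
by rewrite big_cons IH mulrS.
Qed.

Section Bound.
Variables (S : finType) (Rs : seq (reaction S)) (RR : realType) (phi s Pi : RR).
Variables (Q : seq (reaction S)) (q : reaction S) (Bc : cfg S -> Prop).
Implicit Types (c : cfg S) (ps : seq (reaction S)) (a : reaction S).
Hypothesis Hphi : 0 < phi.
Hypothesis Hs : 0 < s.
Hypothesis HRs : (0 < size Rs)%N.
Hypothesis HBpos : forall c, Bc c -> 0 < ptotal Rs phi c.
Hypothesis HBPi : forall c, Bc c -> ptotal Rs phi c <= Pi.
Hypothesis Hclose : forall c a, Bc c -> a \in Rs -> s / phi < propensity Rs phi c a ->
  Bc (apply a c) /\ a \notin Q.
Hypothesis Hq : forall c, Bc c -> applicable q c.

Let eps := (size Rs)%:R * (s / phi).

Lemma eps_gt0 : 0 < eps.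
Proof. by rewrite /eps mulr_gt0 ?ltr0n // divr_gt0. Qed.

Lemma Wbound N c Rem : Bc c -> q \in Rem ->
  Num.min (N%:R / (2 * Pi)) (1 / (2 * eps)) <= Wtrunc Rs phi Q N c Rem.
Proof.
have e0 := eps_gt0.
elim: N c Rem => [|N IH] c Rem Bcc qR.
  by rewrite /= mul0r ge_min lexx.
have P0 : 0 < ptotal Rs phi c := HBpos Bcc.
have Pi0 : 0 < Pi := lt_le_trans P0 (HBPi Bcc).
set m := Num.min (N%:R / (2 * Pi)) (1 / (2 * eps)).
have h2P : 0 < 2 * Pi by rewrite mulr_gt0.
have h2e : 0 < 2 * eps by rewrite mulr_gt0.
have m0 : 0 <= m.
  rewrite /m le_min; apply/andP; split; apply: divr_ge0;
  by [exact: ler0n | exact: ler01 | exact: ltW].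
have me : eps * m <= 1 / 2.
  have : m <= 1 / (2 * eps) by rewrite /m ge_min lexx orbT.
  move=> h; apply: le_trans (ler_wpM2l (ltW e0) h) _.
  have -> : eps * (1 / (2 * eps)) = 1 / 2.
    by field; exact: lt0r_neq0.
  by [].
cbn [Wtrunc].
set P := ptotal Rs phi c.
set u := P^-1.
have u0 : 0 <= u by rewrite invr_ge0 ltW.
have Pu : P * u = 1 by rewrite /u mulfV // lt0r_neq0.
have uPi : Pi^-1 <= u.
  by rewrite /u lef_pV2 ?posrE // HBPi.
set Sg := (X in _ <= _ + X).
have sumb : \sum_(a <- Rs) (propensity Rs phi c a * u * m - s / phi * u * m) <= Sg.
  rewrite /Sg !big_seq; apply: ler_sum => a aR.
  have pa0 : 0 <= propensity Rs phi c a by apply: prop_ge0.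
  have pu0 : 0 <= propensity Rs phi c a * u by rewrite mulr_ge0.
  have su0 : 0 <= s / phi * u * m by rewrite !mulr_ge0 // ?invr_ge0 ltW.
  case: (ltrP (s / phi) (propensity Rs phi c a)) => hpa.
    have [Bc' naQ] := Hclose Bcc aR hpa.
    have qR' : q \in [seq q0 <- Rem | applicable q0 (apply a c)].
      by rewrite mem_filter Hq // qR.
    rewrite (negbTE naQ) /=; case: eqP => [E|_]; first by rewrite E in qR'.
    have ih := IH _ _ Bc' qR'.
    have := ler_wpM2l pu0 ih; rewrite -/m; lra.
  have X0 : 0 <= (if (a \in Q) || ([seq q0 <- Rem | applicable q0 (apply a c)] == [::])
       then 0 else Wtrunc Rs phi Q N (apply a c) [seq q0 <- Rem | applicable q0 (apply a c)]).
    by case: ifP => _ //; apply: W_ge0.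
  have h1 : propensity Rs phi c a * u * m <= s / phi * u * m.
    by apply: ler_wpM2r => //; apply: ler_wpM2r.
  have h2 := mulr_ge0 pu0 X0.
  by apply: (le_trans _ h2); rewrite subr_le0.
have sumE : \sum_(a <- Rs) (propensity Rs phi c a * u * m - s / phi * u * m) =
    m - eps * u * m.
  rewrite big_split /= sumrN -!mulr_suml sum_const_seq -mulr_natl.
  rewrite -/(ptotal Rs phi c) -/P Pu mul1r /eps.
  by rewrite !mulrA.
have F2 : eps * u * m <= u / 2.
  have := ler_wpM2l u0 me; rewrite mulrA [u * eps]mulrC; lra.
have F5 : 1 / (2 * Pi) = Pi^-1 / 2 by field; exact: lt0r_neq0.
have F4 : Num.min (N%:R / (2 * Pi) + 1 / (2 * Pi)) (1 / (2 * eps)) <= m + 1 / (2 * Pi).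
  have d0 : 0 <= 1 / (2 * Pi) by rewrite divr_ge0 // ltW.
  have hm : (N%:R / (2 * Pi) <= m) || (1 / (2 * eps) <= m) by rewrite -ge_min.
  rewrite ge_min; case/orP: hm => h; apply/orP; [left | right]; lra.
have F6 : N.+1%:R / (2 * Pi) = N%:R / (2 * Pi) + 1 / (2 * Pi).
  by rewrite -natr1 mulrDl.
rewrite F6; lra.
Qed.

Lemma TC_bound rho c : Bc c -> q \in rho c -> Q = rho c ->
  ((1 / (2 * eps))%:E <= TC Rs phi rho c)%E.
Proof.
move=> Bcc qQ EQ.
have P0 : 0 < ptotal Rs phi c := HBpos Bcc.
have Pi0 : 0 < Pi := lt_le_trans P0 (HBPi Bcc).
have e0 := eps_gt0.
pose N := Num.Def.archi_bound (2 * Pi / (2 * eps)).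
have hN : 2 * Pi / (2 * eps) < N%:R.
  by apply: archi_boundP; rewrite divr_ge0 // ltW // mulr_gt0.
have hT : ((Wtrunc Rs phi (rho c) N c [seq q0 <- rho c | applicable q0 c])%:E
    <= TC Rs phi rho c)%E.
  by apply: ereal_sup_ubound; exists N.
apply: le_trans hT; rewrite lee_fin -EQ.
have qR : q \in [seq q0 <- Q | applicable q0 c] by rewrite mem_filter Hq // EQ.
apply: le_trans (Wbound N Bcc qR).
rewrite le_min lexx andbT.
have -> : 1 / (2 * eps) = (2 * Pi / (2 * eps)) / (2 * Pi).
  by field; rewrite !lt0r_neq0.
apply: ler_wpM2r; last exact: ltW.
by rewrite invr_ge0 mulr_ge0 // ltW.
Qed.

End Bound.


Lemma sum_ord_mono (R : realType) (F : nat -> \bar R) k n :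
  (forall i, (0 <= F i)%E) -> (k <= n)%N -> (\sum_(i < k) F i <= \sum_(i < n) F i)%E.
Proof.
move=> F0 kn; rewrite -(big_mkord xpredT F) -(big_mkord xpredT F).
by apply: (@lee_sum_nneg_natr _ F xpredT 0%N (fun i _ _ => F0 i)).
Qed.

Lemma flatten_nseq_valid (S : finType) (Rs : seq (reaction S)) c W k :
  valid_path Rs c W -> path_end c W = c ->
  valid_path Rs c (flatten (nseq k W)) /\ path_end c (flatten (nseq k W)) = c.
Proof.
move=> v e; elim: k => [|k [v' e']] //=.
by split; [apply/valid_path_cat; rewrite e | rewrite path_end_cat e].
Qed.

Lemma size_flatten_nseq (T : Type) (W : seq T) k : size (flatten (nseq k W)) = (k * size W)%N.
Proof. by elim: k => //= k IH; rewrite size_cat IH mulSn. Qed.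

Section Main.
Variables (S U : finType) (Rs : seq (reaction S)) (mu : S -> U)
  (Crel : {ffun U -> nat} -> {ffun U -> nat} -> Prop) (x : mode) (c0 : cfg S).
Variables (P0 W : seq (reaction S)) (fc : cfg S) (M : nat).
Hypothesis Hnorm : forall a, a \in Rs -> (norm1 a.1 <= norm1 a.2)%N.
Hypothesis Happ : forall c : cfg S, (1 <= norm1 c)%N -> has (fun a => applicable a c) Rs.
Hypothesis Hn0 : (1 <= norm1 c0)%N.
Hypothesis HP0 : valid_path Rs c0 P0.
Hypothesis HP0e : path_end c0 P0 = fc.
Hypothesis HW : valid_path Rs fc W.
Hypothesis HWe : path_end fc W = fc.
Hypothesis HL : (0 < size W)%N.
Hypothesis HM : (0 < M)%N.
Hypothesis Hng : ~ goal Rs x (ZI mu Crel c0) fc.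
Hypothesis Hcorr : correct Rs mu Crel x.
Hypothesis Hval : valid mu Crel c0.

Local Notation L := (size W).
Local Notation p := (size P0).
Definition Lst := P0 ++ flatten (nseq M W).
Definition eta := mkE Rs c0 Lst.
Definition sigma (t : nat) : nat :=
  if (t <= p)%N then p
  else if (t <= p + M * L)%N then (p + L * ((t - p + L.-1) %/ L))%N else t.

Lemma size_Lst : size Lst = (p + M * L)%N.
Proof. by rewrite /Lst size_cat size_flatten_nseq. Qed.

Lemma valid_Lst : valid_path Rs c0 Lst.
Proof.
apply/valid_path_cat; split => //; rewrite HP0e.
by case: (flatten_nseq_valid M HW HWe).
Qed.

Lemma eta_exec : is_execution Rs eta c0.
Proof. rewrite /eta. exact: (mkE_exec Hnorm Happ Hn0 valid_Lst). Qed.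

Lemma eta_fair : weakly_fair Rs eta.
Proof. exact: mkE_fair Hn0 valid_Lst. Qed.

Lemma sigma_ge t : (t <= sigma t)%N.
Proof.
rewrite /sigma; case: ifP => [h1|h1]; first by rewrite h1.
case: ifP => h2 //.
have := divn_eq (t - p + L.-1) L; have := ltn_pmod (t - p + L.-1) HL.
set q := (_ %/ L)%N; set r := (_ %% L)%N; move=> h3 h4.
rewrite (mulnC L); lia.
Qed.

Lemma Lst_split i : (i < M)%N ->
  Lst = (P0 ++ flatten (nseq i W)) ++ W ++ flatten (nseq (M - i.+1) W).
Proof.
move=> hi; rewrite /Lst -catA; congr (P0 ++ _).
have e : M = (i + (M - i.+1).+1)%N by lia.
by rewrite {1}e nseqD flatten_cat.
Qed.

Lemma ec_loop i j : (i < M)%N -> (j <= L)%N ->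
  ec eta (p + i * L + j) = cfg_at fc W j.
Proof.
move=> hi hj.
have hle : (i.+1 * L <= M * L)%N by rewrite leq_mul2r hi orbT.
rewrite /eta mkE_ec; last by rewrite size_Lst; move: hle; rewrite mulSn; lia.
have hpe : path_end c0 (P0 ++ flatten (nseq i W)) = fc.
  rewrite path_end_cat HP0e; by case: (flatten_nseq_valid i HW HWe).
rewrite (Lst_split hi) cfg_at_catr size_cat size_flatten_nseq ?leq_addr //.
by rewrite hpe addKn cfg_at_catl.
Qed.

Lemma ea_loop i j : (i < M)%N -> (j < L)%N ->
  ea eta (p + i * L + j) = nth (d0 S) W j.
Proof.
move=> hi hj.
have hle : (i.+1 * L <= M * L)%N by rewrite leq_mul2r hi orbT.
rewrite /eta mkE_ea; last by rewrite size_Lst; move: hle; rewrite mulSn; lia.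
rewrite (Lst_split hi) nth_cat size_cat size_flatten_nseq.
by rewrite ltnNge leq_addr /= addKn nth_cat hj.
Qed.

Lemma ec_end : ec eta (p + M * L) = fc.
Proof.
have hM : (M.-1 < M)%N by rewrite prednK.
have -> : (p + M * L = p + M.-1 * L + L)%N.
  by rewrite -addnA -mulSnr prednK.
by rewrite ec_loop // cfg_at_size.
Qed.

Lemma ec_p : ec eta p = fc.
Proof. by have := ec_loop HM (leq0n L); rewrite mul0n !addn0 cfg_at0. Qed.

Lemma nogoal t : (t <= p + M * L)%N -> ~ goal Rs x (ZI mu Crel c0) (ec eta t).
Proof.
move=> le g; apply: Hng; rewrite -ec_end.
exact: goal_reach g (exec_reach_le eta_exec le).
Qed.

Definition tst := tstar Rs mu Crel x c0 eta.

Lemma tstarP : goal Rs x (ZI mu Crel c0) (ec eta tst) /\ (p + M * L < tst)%N.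
Proof.
have ex := Hcorr Hval eta_exec eta_fair.
have [g _] := pminP 0 ex; split => //.
by rewrite ltnNge; apply/negP => le; exact: nogoal le g.
Qed.

Section Rounds.
Variable rho : cfg S -> seq (reaction S).
Hypothesis Hrho : runtime_policy Rs rho.

Lemma rho_sub c : {subset rho c <= Rs}.
Proof. by move=> a /Hrho; rewrite mem_filter => /andP []. Qed.

Local Notation tr i := (tround rho sigma eta i).

Lemma tr_incr i : (i <= tr i)%N.
Proof.
elim: i => //= i IH.
have [lt _ _] := tauP (sigma (tr i)) eta_fair (@rho_sub (ec eta (sigma (tr i)))).
exact: leq_ltn_trans (leq_trans IH (sigma_ge _)) lt.
Qed.

Definition ist := istar Rs mu Crel x c0 rho sigma eta.

Lemma istP : (tst <= tr ist)%N /\ forall i, (tst <= tr i)%N -> (ist <= i)%N.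
Proof.
have ex : exists i, (tst <= tr i)%N by exists tst; apply: tr_incr.
exact: pminP 0 ex.
Qed.

Lemma ist_pos : (0 < ist)%N.
Proof.
have [h _] := istP; have [_ h2] := tstarP.
rewrite lt0n; apply/negP => /eqP e; move: h; rewrite e /=; lia.
Qed.

Lemma eround0 : eround rho sigma eta 0 = fc.
Proof.
have e : sigma 0 = p by rewrite /sigma leq0n.
by rewrite /eround [tround _ _ _ 0]/= e ec_p.
Qed.

Lemma caseA :
  has (fun j => nth (d0 S) W j \in rho fc) (iota 0 L) ||
  all (fun q => has (fun j => ~~ applicable q (cfg_at fc W j)) (iota 0 L)) (rho fc) ->
  (M < ist)%N /\ forall i, (i < M)%N -> eround rho sigma eta i = fc.
Proof.
move=> hA.
have key : forall i, (i <= M)%N -> (tr i <= p + i * L)%N /\ sigma (tr i) = (p + i * L)%N.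
  elim => [|i IH] hi.
    by rewrite /= /sigma leq0n mul0n addn0.
  have [h1 h2] := IH (ltnW hi).
  have ece : ec eta (sigma (tr i)) = fc by rewrite h2 -[(p + i * L)%N]addn0 ec_loop // cfg_at0.
  have trE : tr i.+1 = tau eta (sigma (tr i)) (rho fc) by rewrite -ece.
  have [lt _ mn] := tauP (sigma (tr i)) eta_fair (@rho_sub fc).
  have [s0 [ps hs]] : exists s0, tau_pred eta (sigma (tr i)) (rho fc) s0 /\
      (s0 <= p + i * L + L)%N.
    rewrite h2; case/orP: hA => [/hasP [j] | A2].
      rewrite mem_iota add0n => /andP [_ jL] jQ.
      exists (p + i * L + j.+1)%N; split; last by rewrite leq_add2l.
      rewrite /tau_pred addnS ltnS leq_addr andTb.
      by rewrite (_ : (p + i * L + j).+1.-1 = p + i * L + j)%N // ea_loop // jQ.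
    exists (p + i * L + L)%N; split => //.
    rewrite /tau_pred -{1}[(p + i * L)%N]addn0 ltn_add2l HL andTb; apply/orP; right.
    apply/allP => q qQ; have /hasP [j] := allP A2 q qQ.
    rewrite mem_iota add0n => /andP [_ jL] nap.
    apply/hasP; exists (p + i * L + j)%N.
      rewrite mem_index_iota leq_addr /=; lia.
    by rewrite ec_loop // ltnW.
  have t1 := mn s0 ps.
  rewrite -trE in lt t1; rewrite h2 in lt.
  have hle : (i.+1 * L <= M * L)%N by rewrite leq_mul2r hi orbT.
  have mS : (i.+1 * L = i * L + L)%N by rewrite mulSnr.
  set t := tr i.+1 in lt t1 *.
  split; first by lia.
  rewrite /sigma ifN; last by rewrite -ltnNge; lia.
  rewrite ifT; last by lia.
  have E : (t - p + L.-1 = i.+1 * L + (t - p - i * L - 1))%N.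
    have : (0 < L)%N := HL. lia.
  rewrite E divnMDl // divn_small; last by lia.
  by rewrite addn0 mulnC.
split.
  rewrite ltnNge; apply/negP => le.
  have [h1 _] := istP; have [_ h2] := tstarP; have [h3 _] := key _ le.
  have : (ist * L <= M * L)%N by rewrite leq_mul2r le orbT.
  lia.
move=> i hi; have [_ h] := key _ (ltnW hi).
by rewrite /eround h -[(p + i * L)%N]addn0 ec_loop // cfg_at0.
Qed.

End Rounds.
End Main.


Unset Implicit Arguments.
Theorem lemma4p4 (RR : realType) (S U : finType) (Rs : seq (reaction S))
  (mu : S -> U) (Crel : {ffun U -> nat} -> {ffun U -> nat} -> Prop)
  (x : mode) (vol : nat -> RR) (C0 : set (cfg S)) :
  wf_crn Rs -> finite_density Rs mu Crel -> volume_linear vol ->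
  correct Rs mu Crel x ->
  (forall c0, C0 c0 -> valid mu Crel c0) -> ~ finite_set C0 ->
  speed_fault Rs mu Crel x vol C0 ->
  exists2 kappa : RR, 0 < kappa &
    forall n0 : nat, (0 < n0)%N ->
      exists c0 : cfg S, [/\ C0 c0, (n0 <= norm1 c0)%N &
        exists (eta : execution S) (sigma : nat -> nat),
          [/\ is_execution Rs eta c0, weakly_fair Rs eta, skipping_policy sigma &
              forall rho : cfg S -> seq (reaction S), runtime_policy Rs rho ->
                ((kappa * (norm1 c0)%:R)%:E <=
                   RT Rs mu Crel x (vol (norm1 c0)) rho sigma c0 eta)%E]].
Proof.
move=> wf fd vl corr C0v _ [s s0 sf].
case: wf => uniqR size12 Hnorm Rofne voidR.
have Happ : forall c : cfg S, (1 <= norm1 c)%N -> has (fun a => applicable a c) Rs.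
  move=> c c1; have [a [aR app _]] := unimol (RR := RR) (phi := 1) ltr01 Rofne c1.
  by apply/hasP; exists a.
have [D HD] := fd.
have [a [b [a0 b0 Hab]]] := vl.
have R0 : (0 < size Rs)%N.
  have [c1 [C1 _ _]] := sf 1%N isT.
  by have := Happ c1 (proj1 (C0v c1 C1)); case: (Rs).
set k : RR := (size Rs)%:R.
have k0 : 0 < k by rewrite ltr0n.
exists (a / (2 * k * s)); first by rewrite divr_gt0 // !mulr_gt0.
move=> n0 n0pos.
pose N1 := (Num.Def.archi_bound (k * s / a)).+1.
have [c0 [C0c0 len [c Hpit]]] := sf (maxn n0 N1) (leq_trans n0pos (leq_maxl _ _)).
exists c0; split => //; first exact: leq_trans (leq_maxl _ _) len.
set n := norm1 c0; set phi := vol n.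
have vc0 := C0v c0 C0c0.
have n1 : (1 <= n)%N by case: vc0.
have [hphi1 _] := Hab n n1.
have nN1 : (N1 <= n)%N := leq_trans (leq_maxr _ _) len.
have hks : k * s < phi.
  have h1 : k * s / a < N1%:R.
    apply: lt_trans (archi_boundP _) _.
      apply: divr_ge0; [apply: mulr_ge0|]; by [exact: ltW].
    by rewrite ltr_nat.
  have h2 : (N1%:R : RR) <= n%:R by rewrite ler_nat.
  have h3 : k * s < a * n%:R.
    rewrite -ltr_pdivrMl // mulrC; exact: lt_le_trans h1 h2.
  exact: lt_le_trans h3 hphi1.
have phi0 : 0 < phi by apply: le_lt_trans hks; rewrite mulr_ge0 // ltW.
pose K := (D * n)%N.
have HK : forall c', reach Rs c0 c' -> (norm1 c' <= K)%N := fun c' r => HD c0 c' vc0 r.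
have [rc pitc] := Hpit.
pose cp := proj K c.
have ecp : emb cp = c := emb_proj (HK c rc).
have [f [cpf scc]] := bottom_scc Rs phi s cp.
have creach : forall y z : {ffun S -> 'I_K.+1}, connect (fe Rs phi s (K:=K)) y z ->
    reach Rs (emb y) (emb z).
  by move=> y z /fast_path [ps [v pe _ _]]; rewrite -pe; exact: reach_path v.
have rB : forall g, connect (fe Rs phi s (K:=K)) f g -> reach Rs c0 (emb g).
  move=> g fg; apply: reach_trans rc _; rewrite -ecp.
  exact: creach (connect_trans cpf fg).
have Hclose : forall (g : {ffun S -> 'I_K.+1}) (a' : reaction S), connect (fe Rs phi s (K:=K)) f g -> a' \in Rs ->
    fast Rs phi s (emb g) a' -> exists h : {ffun S -> 'I_K.+1}, apply a' (emb g) = emb h.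
  move=> g a' cg aR fa; have app : applicable a' (emb g) by move: fa; rewrite /fast; case: (applicable _ _). exists (proj K (apply a' (emb g))).
  rewrite emb_proj //; apply: HK; apply: reach_trans (rB g cg) _.
  by apply: reach_step (reach_refl _ _); exists a'.
have [W [vW peW aBW covW]] := walk_cover scc Hclose (d0 S).
have hsk : s / phi < 1 / k.
  have -> : s / phi = (s * k / phi) * k^-1.
    by field; rewrite !lt0r_neq0.
  rewrite ltr_pM2r ?invr_gt0 // ltr_pdivrMr // mul1r mulrC; exact: hks.
have ufast : forall c', reach Rs c0 c' -> exists a', a' \in Rs /\ fast Rs phi s c' a'.
  move=> c' r; have n1' : (1 <= norm1 c')%N := leq_trans n1 (reach_norm Hnorm r).
  have [a' [aR app pr]] := unimol phi0 Rofne n1'.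
  exists a'; split => //; rewrite /fast app /=; exact: lt_le_trans hsk pr.
have sphi0 : 0 <= s / phi by rewrite divr_ge0 // ltW.
have HL : (0 < size W)%N.
  have [a' [aR fa]] := ufast _ (rB f (connect0 _ _)).
  by have [j [lj _ _]] := covW f a' (connect0 _ _) aR fa; case: (size W) lj.
have [ps0 [v0 pe0]] := path_of_reach rc.
have [ps1 [v1 pe1 ns1 _]] := fast_path cpf.
rewrite ecp in v1 pe1 ns1.
pose P0 := ps0 ++ ps1.
have HP0 : valid_path Rs c0 P0 by apply/valid_path_cat; rewrite pe0.
have HP0e : path_end c0 P0 = emb f by rewrite path_end_cat pe0.
have Hng : ~ goal Rs x (ZI mu Crel c0) (emb f).
  by move=> g; apply: ns1; apply: pitc v1 _; rewrite pe1.
have ptpos : forall c', reach Rs c0 c' -> 0 < ptotal Rs phi c'.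
  move=> c' r; have [a' [aR /andP [_ fa]]] := ufast c' r.
  apply: lt_le_trans (prop_le_ptotal phi0 c' aR).
  exact: le_lt_trans sphi0 fa.
set pf := ptotal Rs phi (emb f).
have pf0 : 0 < pf := ptpos _ (rB f (connect0 _ _)).
set kappa := a / (2 * k * s).
have kap0 : 0 < kappa by rewrite divr_gt0 // !mulr_gt0.
pose M := (Num.Def.archi_bound (kappa * n%:R * pf)).+1.
have HM : (0 < M)%N by [].
have hMb : kappa * n%:R * pf < M%:R.
  apply: lt_trans (archi_boundP _) _.
    apply: mulr_ge0; [apply: mulr_ge0|]; by [exact: ltW | exact: ler0n].
  by rewrite ltr_nat.
exists (eta Rs c0 P0 W M), (sigma P0 W M); split.
- exact: (eta_exec M Hnorm Happ n1 HP0 HP0e vW peW).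
- exact: (eta_fair (M := M) n1 HP0 HP0e vW peW).
- by move=> t; apply: (sigma_ge P0 n1 HL HM).
move=> rho Hrho; rewrite /RT.
have isp := ist_pos Hnorm Happ n1 HP0 HP0e vW peW HL HM Hng corr vc0 Hrho.
have F0 : forall i, (0 <= TC Rs phi rho
    (eround rho (sigma P0 W M) (eta Rs c0 P0 W M) i))%E.
  by move=> i; apply: TC_ge0.
case hA : (has (fun j => nth (d0 S) W j \in rho (emb f)) (iota 0 (size W)) ||
  all (fun q => has (fun j => ~~ applicable q (cfg_at (emb f) W j)) (iota 0 (size W)))
    (rho (emb f))).
  have [Mlt er] := caseA Hnorm Happ n1 HP0 HP0e vW peW HL HM Hng corr vc0 Hrho hA.
  apply: le_trans (sum_ord_mono F0 (ltnW Mlt)).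
  rewrite (eq_bigr (fun _ => TC Rs phi rho (emb f))); last by move=> i _; rewrite er.
  have hs : (\sum_(i < M) ((ptotal Rs phi (emb f))^-1)%:E <= \sum_(i < M) TC Rs phi rho (emb f))%E.
    by apply: lee_sum => i _; apply: TC_ge_inv.
  apply: le_trans hs.
  rewrite sumEFin lee_fin sumr_const card_ord -[_ *+ M]mulr_natl.
  rewrite ler_pdivlMr //; exact: ltW.
move/negbT: hA; rewrite negb_or => /andP [nA1 nA2].
have [q qQ qall] : exists2 q, q \in rho (emb f) &
    forall j, (j < size W)%N -> applicable q (cfg_at (emb f) W j).
  move: nA2; rewrite -has_predC => /hasP [q qQ /= nq]; exists q => // j jL.
  apply/negPn; apply/negP => nap; apply: (negP nq); apply/hasP; exists j => //.
  by rewrite mem_iota.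
set Bc := inB Rs phi s f.
pose Pi := \sum_(g : {ffun S -> 'I_K.+1}) ptotal Rs phi (emb g).
have HBpos : forall c', Bc c' -> 0 < ptotal Rs phi c'.
  by move=> c' [g [cg ->]]; apply: ptpos; apply: rB.
have HBPi : forall c', Bc c' -> ptotal Rs phi c' <= Pi.
  move=> c' [g [cg ->]]; rewrite /Pi (bigD1 g) //= lerDl.
  by apply: sumr_ge0 => h _; apply: ptotal_ge0.
have Hclose' : forall c' a', Bc c' -> a' \in Rs -> s / phi < propensity Rs phi c' a' ->
    Bc (apply a' c') /\ a' \notin rho (emb f).
  move=> c' a' [g [cg ->]] aR hp.
  have app : applicable a' (emb g) by apply: prop_app; exact: le_lt_trans sphi0 hp.
  have fa : fast Rs phi s (emb g) a' by rewrite /fast app hp.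
  have [h eh] := Hclose g a' cg aR fa.
  split.
    exists h; split => //; apply: connect_trans cg (connect1 _).
    by apply/hasP; exists a' => //; rewrite fa eh eqxx.
  apply/negP => aQ; have [j [lj _ nj]] := covW g a' cg aR fa.
  apply: (negP nA1); apply/hasP; exists j; first by rewrite mem_iota.
  by rewrite nj.
have Hq : forall c', Bc c' -> applicable q c'.
  move=> c' [g [cg ->]]; have [a' [aR fa]] := ufast _ (rB g cg).
  have [j [lj cj _]] := covW g a' cg aR fa.
  by rewrite -cj; apply: qall.
have Bf : Bc (emb f) by exists f; split => //; exact: connect0.
have TB := TC_bound phi0 s0 R0 HBpos HBPi Hclose' Hq (rho := rho) Bf qQ erefl.
apply: le_trans (sum_ord_mono F0 isp).
rewrite big_ord1 (eround0 (M := M) n1 HP0e vW peW HL HM rho).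
apply: le_trans TB; rewrite lee_fin.
have -> : 1 / (2 * ((size Rs)%:R * (s / phi))) = phi / (2 * k * s).
  by rewrite -/k; field; rewrite !lt0r_neq0.
rewrite /kappa mulrAC ler_pM2r ?invr_gt0 ?mulr_gt0 //.
Qed.
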